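(* Let $\lambda$ be an infinite cardinal and $p:[\lambda^+]^2\to\lambda$ a partition. Then there exists a partition $\bar p:[\lambda^+]^2\to\lambda$ with injective fibers such that, for all cardinals $\theta,\chi,\nu,\nu'$ and $i\in\{0,1\}$: if $\mathrm{pr}_i(\lambda^+,\lambda^+,\theta,\chi)_{\bar p}$ holds then $\mathrm{pr}_i(\lambda^+,\lambda^+,\theta,\chi)_{p}$ holds, and if $\mathrm{pr}_i(\lambda^+,\nu\circledast\lambda^+/\nu'\circledast\lambda^+,\theta,\chi)_{\bar p}$ holds then $\mathrm{pr}_i(\lambda^+,\nu\circledast\lambda^+/\nu'\circledast\lambda^+,\theta,\chi)_{p}$ holds.
   Context: $[\kappa]^2$ denotes the set of pairs $(\alpha,\beta)$ with $\alpha<\beta<\kappa$; a partition is any function $p:[\kappa]^2\to\mu$. A partition $p:[\kappa]^2\to\mu$ has injective fibers iff $p(\alpha,\beta)\ne p(\alpha',\beta)$ whenever $\alpha<\alpha'<\beta$. For an ordinal $\sigma$, $[\kappa]^\sigma$ is the set of subsets of $\kappa$ of order type $\sigma$; for $a\in[\kappa]^\sigma$ and $i<\sigma$, $a(i)$ is the $i$-th element of $a$; $a<b$ means every element of $a$ is below every element of $b$; $[\mathcal A]^{\nu'}$ is the set of subfamilies of $\mathcal A$ of cardinality $\nu'$. Given $p:[\kappa]^2\to\mu$, a coloring $c:[\kappa]^2\to\theta$ witnesses: - $\mathrm{pr}_1(\kappa,\kappa,\theta,\chi)_p$ iff for every ordinal $\sigma<\chi$, every pairwise disjoint $\mathcal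 A\subseteq[\kappa]^\sigma$ of size $\kappa$ and every $\tau:\mu\to\theta$ there are $a,b\in\mathcal A$, $a<b$, with $c(\alpha,\beta)=\tau(p(\alpha,\beta))$ for all $\alpha\in a,\beta\in b$; - $\mathrm{pr}_0(\kappa,\kappa,\theta,\chi)_p$ iff for every ordinal $\sigma<\chi$, every pairwise disjoint $\mathcal A\subseteq[\kappa]^\sigma$ of size $\kappa$ and every matrix $(\tau_{i,j})_{i,j<\sigma}$ of functions $\mu\to\theta$ there are $a,b\in\mathcal A$, $a<b$, with $c(a(i),b(j))=\tau_{i,j}(p(a(i),b(j)))$ for all $i,j<\sigma$; - $\mathrm{pr}_1(\kappa,\nu\circledast\kappa/\nu'\circledast\kappa,\theta,\chi)_p$ iff for every ordinal $\sigma<\chi$ and every two families $\mathcal A,\mathcal B\subseteq[\kappa]^\sigma$, each pairwise disjoint, with $|\mathcal A|=\nu$, $|\mathcal B|=\kappa$, there is $\mathcal A'\in[\mathcal A]^{\nu'}$ such that for every $\tau:\mu\to\theta$ there are $a\in\mathcal A'$, $b\in\mathcal B$, $a<b$, with $c(\alpha,\beta)=\tau(p(\alpha,\beta))$ for all $\alpha\in a,\beta\in b$; - $\mathrm{pr}_0(\kappa,\nu\circledast\kappa/\nu'\circledast\kappa,\theta,\chi)_p$: same as the previous item but with ''for every matrix $(\tau_{i,j})_{i,j<\sigma}$ of functions $\mu\to\theta$ there are $a\in\mathcal A'$, $b\in\mathcal B$, $a<b$, with $c(a(i),b(j))=\tau_{i,j}(p(a(i),b(j)))$ for all $i,j<\sigma$''.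 Each principle asserts that a coloring witnessing it exists. *)

(* Defs.v *)
(* plain types with Prop-valued relations model cardinals/ordinals. *)
From Stdlib Require Import Classical.

Set Implicit Arguments.

Record well_order (T : Type) (lt : T -> T -> Prop) : Prop := {
  wo_irrefl : forall x, ~ lt x x;
  wo_trans : forall x y z, lt x y -> lt y z -> lt x z;
  wo_total : forall x y, lt x y \/ x = y \/ lt y x;
  wo_wf : well_founded lt
}.

Definition injective_fun (A B : Type) (f : A -> B) : Prop :=
  forall x y, f x = f y -> x = y.

Definition injects (A B : Type) : Prop := exists f : A -> B, injective_fun f.

(* The proper initial segment of (X, ltX) below x0; its order type is an
   ordinal sigma < the order type of (X, ltX). *)
Definition seg (X : Type) (ltX : X -> X -> Prop) (x0 : X) : Type :=
  { x : X | ltX x x0 }.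

(* (X, ltX) is an initial ordinal (a cardinal): it does not inject into any
   proper initial segment of itself. *)
Definition is_initial (X : Type) (ltX : X -> X -> Prop) : Prop :=
  well_order ltX /\ forall x0, ~ injects X (seg ltX x0).

(* (K, ltK) has order type lambda^+ where lambda = |L| is infinite. *)
Definition is_successor_of (L K : Type) (ltK : K -> K -> Prop) : Prop :=
  well_order ltK /\ injects nat L /\
  (forall k0, injects (seg ltK k0) L) /\ ~ injects K L.

Section Principles.
Variables (K : Type) (ltK : K -> K -> Prop) (L : Type)
          (X : Type) (ltX : X -> X -> Prop) (Theta : Type).

(* An element a of [kappa]^sigma (sigma = type of seg ltX x0) is given by its
   increasing enumeration a : seg ltX x0 -> K, a(i) the i-th element. *)
Definition incr (x0 : X) (a : seg ltX x0 -> K) : Prop :=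
  forall s t : seg ltX x0, ltX (proj1_sig s) (proj1_sig t) -> ltK (a s) (a t).

(* A pairwise disjoint family of elements of [kappa]^sigma, indexed
   bijectively by I (so the family has cardinality |I|). *)
Definition disj_family (x0 : X) (I : Type) (F : I -> seg ltX x0 -> K) : Prop :=
  (forall i, incr (F i)) /\
  (forall i j, i <> j -> forall s t, F i s <> F j t) /\
  (forall i j, (forall k, (exists s, F i s = k) <-> (exists s, F j s = k)) -> i = j).

Definition below (x0 : X) (a b : seg ltX x0 -> K) : Prop :=
  forall s t, ltK (a s) (b t).

(* Partitions [kappa]^2 -> L are functions K -> K -> L (only values at
   alpha < beta matter). *)
Definition pr1 (p : K -> K -> L) : Prop :=
  exists c : K -> K -> Theta,
  forall (x0 : X) (A : K -> seg ltX x0 -> K), disj_family A ->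
  forall tau : L -> Theta,
  exists i j, below (A i) (A j) /\
    forall s t, c (A i s) (A j t) = tau (p (A i s) (A j t)).

Definition pr0 (p : K -> K -> L) : Prop :=
  exists c : K -> K -> Theta,
  forall (x0 : X) (A : K -> seg ltX x0 -> K), disj_family A ->
  forall tau : seg ltX x0 -> seg ltX x0 -> L -> Theta,
  exists i j, below (A i) (A j) /\
    forall s t, c (A i s) (A j t) = tau s t (p (A i s) (A j t)).

Definition pr1_circ (N N' : Type) (p : K -> K -> L) : Prop :=
  exists c : K -> K -> Theta,
  forall (x0 : X) (A : N -> seg ltX x0 -> K) (B : K -> seg ltX x0 -> K),
  disj_family A -> disj_family B ->
  exists g : N' -> N, injective_fun g /\
  forall tau : L -> Theta,
  exists n k, below (A (g n)) (B k) /\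
    forall s t, c (A (g n) s) (B k t) = tau (p (A (g n) s) (B k t)).

Definition pr0_circ (N N' : Type) (p : K -> K -> L) : Prop :=
  exists c : K -> K -> Theta,
  forall (x0 : X) (A : N -> seg ltX x0 -> K) (B : K -> seg ltX x0 -> K),
  disj_family A -> disj_family B ->
  exists g : N' -> N, injective_fun g /\
  forall tau : seg ltX x0 -> seg ltX x0 -> L -> Theta,
  exists n k, below (A (g n)) (B k) /\
    forall s t, c (A (g n) s) (B k t) = tau s t (p (A (g n) s) (B k t)).

End Principles.

Definition injective_fibers (K : Type) (ltK : K -> K -> Prop) (L : Type)
  (p : K -> K -> L) : Prop :=
  forall a a' b, ltK a a' -> ltK a' b -> p a b <> p a' b.

(* Main.v *)
Require Import Defs.
From Stdlib Require Import Classical ClassicalEpsilon FunctionalExtensionality ProofIrrelevance Relations Wellfounded Arith Cantor Lia.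

Lemma inj_comp (A B C : Type) : injects A B -> injects B C -> injects A C.
Proof. intros [f Hf] [g Hg]. exists (fun a => g (f a)). intros x y E. auto. Qed.

Lemma inj_prod (A B C D : Type) : injects A B -> injects C D -> injects (A*C) (B*D).
Proof.
  intros [f Hf] [g Hg]. exists (fun x => (f (fst x), g (snd x))).
  intros [a c] [a' c'] E. simpl in E. inversion E. f_equal; auto.
Qed.

Lemma inj_natnat : injects (nat*nat) nat.
Proof. exists to_nat. intros x y E. apply to_nat_inj; auto. Qed.

Lemma inj_hotel (B : Type) : injects nat B -> injects (nat + B) B.
Proof.
  intros [n Hn].
  exists (fun x => match x with
    | inl k => n (to_nat (0, k))
    | inr b => match excluded_middle_informative (exists j, n j = b) with
               | left H => n (to_nat (1, proj1_sig (constructive_indefinite_description _ H)))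
               | right _ => b end end).
  intros [k|b] [k'|b'] E.
  - pose proof (to_nat_inj _ _ (Hn _ _ E)) as E2; clear E; rename E2 into E. inversion E; auto.
  - destruct excluded_middle_informative as [H|H].
    + destruct constructive_indefinite_description as [j Hj]; cbn [proj1_sig] in E.
      pose proof (to_nat_inj _ _ (Hn _ _ E)) as E2; clear E; rename E2 into E. discriminate.
    + exfalso; apply H; eauto.
  - destruct excluded_middle_informative as [H|H].
    + destruct constructive_indefinite_description as [j Hj]; cbn [proj1_sig] in E.
      pose proof (to_nat_inj _ _ (Hn _ _ E)) as E2; clear E; rename E2 into E. discriminate.
    + exfalso; apply H; eauto.
  - destruct excluded_middle_informative as [H|H];
    destruct excluded_middle_informative as [H'|H'].
    + destruct constructive_indefinite_description as [j Hj];
      destruct constructive_indefinite_description as [j' Hj']; cbn [proj1_sig] in E.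
      pose proof (to_nat_inj _ _ (Hn _ _ E)) as E2; clear E; rename E2 into E. inversion E; subst. reflexivity.
    + exfalso; apply H'; eauto.
    + exfalso; apply H; eauto.
    + subst; reflexivity.
Qed.

Lemma sig_eq (A : Type) (P : A -> Prop) (s t : sig P) : proj1_sig s = proj1_sig t -> s = t.
Proof. destruct s as [x p], t as [y q]; simpl; intros ->. f_equal. apply proof_irrelevance. Qed.

Lemma enum (A B : Type) (R : A -> A -> Prop) (b0 : B) :
  well_founded R -> (forall x y, x <> y -> R x y \/ R y x) ->
  injects A B \/ exists a, injects B {y | R y a}.
Proof.
  intros wf tot.
  set (F := fun (x : A) (f : forall y, R y x -> B) =>
    match excluded_middle_informative (exists b, forall y (p : R y x), f y p <> b) with
    | left H => proj1_sig (constructive_indefinite_description _ H)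
    | right _ => b0 end).
  set (h := Fix wf (fun _ => B) F).
  assert (Heq : forall x, h x = F x (fun y _ => h y)).
  { intro x. unfold h. refine (Fix_eq wf (fun _ => B) F _ x). intros x0 f g Hfg.
    assert (f = g) as ->; [|reflexivity].
    apply functional_extensionality_dep; intro y; apply functional_extensionality_dep; intro p; apply Hfg. }
  destruct (classic (forall x, exists b, forall y (p : R y x), h y <> b)) as [Hall | Hnot].
  - left. exists h.
    assert (Hfresh : forall x y, R y x -> h y <> h x).
    { intros x y p. rewrite (Heq x). unfold F. destruct excluded_middle_informative as [H|H].
      + destruct (constructive_indefinite_description _ H) as [b Hb]; simpl. apply (Hb y p).
      + exfalso; apply H; apply Hall. }
    intros x y Hxy. destruct (classic (x = y)) as [e|ne]; auto. exfalso.
    destruct (tot x y ne) as [r|r]; [apply (Hfresh y x r) | apply (Hfresh x y r)]; auto.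
  - right. apply not_all_ex_not in Hnot. destruct Hnot as [x Hx]. exists x.
    assert (Hcov : forall b, exists y, R y x /\ h y = b).
    { intro b. apply NNPP. intro Hn. apply Hx. exists b. intros y p e. apply Hn. exists y; auto. }
    assert (Hg : forall b, {y | R y x /\ h y = b}) by (intro b; apply constructive_indefinite_description; apply Hcov).
    exists (fun b => exist (fun y => R y x) (proj1_sig (Hg b)) (proj1 (proj2_sig (Hg b)))).
    intros b b' E. apply (f_equal (@proj1_sig _ _)) in E. simpl in E.
    destruct (Hg b) as [y [r1 e1]], (Hg b') as [y' [r2 e2]]. simpl in E. congruence.
Qed.

Set Implicit Arguments.
Section Hess.
Variables (K : Type) (ltK : K -> K -> Prop) (WO : well_order ltK).

Definition ltS (g : K) (s t : seg ltK g) := ltK (proj1_sig s) (proj1_sig t).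
Arguments ltS : clear implicits.
Definition TT (g : K) := (nat + seg ltK g)%type.
Definition ltT (g : K) := le_AsB nat (seg ltK g) lt (ltS g).
Arguments ltT : clear implicits.
Definition leT g (x y : TT g) := ltT g x y \/ x = y.
Arguments leT : clear implicits.

Lemma wf_ltT g : well_founded (ltT g).
Proof.
  apply wf_disjoint_sum. apply lt_wf.
  apply (wf_inverse_image _ _ ltK (@proj1_sig _ _) (wo_wf WO)).
Qed.

Lemma ltT_total g (x y : TT g) : ltT g x y \/ x = y \/ ltT g y x.
Proof.
  destruct x as [a|s], y as [b|t].
  - destruct (Nat.lt_trichotomy a b) as [h|[h|h]]; [left|right;left|right;right]; subst; try constructor; auto.
  - left; constructor.
  - right; right; constructor.
  - destruct (wo_total WO (proj1_sig s) (proj1_sig t)) as [h|[h|h]].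
    + left; constructor; exact h.
    + right; left; f_equal; apply sig_eq; exact h.
    + right; right; constructor; exact h.
Qed.

Lemma ltT_trans g (x y z : TT g) : ltT g x y -> ltT g y z -> ltT g x z.
Proof.
  intros h1 h2; inversion h1; subst; inversion h2; subst; constructor;
  unfold ltS in *; pose proof (wo_trans WO); eauto using Nat.lt_trans.
Qed.

Lemma ltT_irrefl g (x : TT g) : ~ ltT g x x.
Proof.
  intro h; inversion h; subst. lia. unfold ltS in *. eapply (wo_irrefl WO); eauto.
Qed.

Lemma leT_trans g (x y z : TT g) : leT g x y -> leT g y z -> leT g x z.
Proof.
  intros [h1|h1] [h2|h2]; subst; unfold leT; eauto using ltT_trans.
Qed.

Definition mx g (x : TT g * TT g) : TT g :=
  if excluded_middle_informative (ltT g (fst x) (snd x)) then snd x else fst x.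

Lemma mx_ge g (x : TT g * TT g) : leT g (fst x) (mx x) /\ leT g (snd x) (mx x).
Proof.
  unfold mx; destruct excluded_middle_informative as [h|h]; unfold leT.
  - auto.
  - split; auto. destruct (ltT_total (fst x) (snd x)) as [h'|[h'|h']]; auto. contradiction.
Qed.

Definition RG g (x y : TT g * TT g) :=
  slexprod _ _ (ltT g) (slexprod _ _ (ltT g) (ltT g)) (mx x, x) (mx y, y).
Arguments RG : clear implicits.

Lemma wf_RG g : well_founded (RG g).
Proof.
  apply (wf_inverse_image _ _ _ (fun x => (mx x, x))).
  apply wf_slexprod. apply wf_ltT. apply wf_slexprod; apply wf_ltT.
Qed.

Lemma RG_total g (x y : TT g * TT g) : x <> y -> RG g x y \/ RG g y x.
Proof.
  intro ne. unfold RG.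
  destruct (ltT_total (mx x) (mx y)) as [h|[h|h]].
  - left; constructor 1; exact h.
  - rewrite h. destruct x as [a b], y as [c d].
    destruct (ltT_total a c) as [h1|[h1|h1]].
    + left; constructor 2; constructor 1; exact h1.
    + subst. destruct (ltT_total b d) as [h2|[h2|h2]].
      * left; constructor 2; constructor 2; exact h2.
      * subst; congruence.
      * right; constructor 2; constructor 2; exact h2.
    + right; constructor 2; constructor 1; exact h1.
  - right; constructor 1; exact h.
Qed.

Lemma RG_bound g (x y : TT g * TT g) : RG g y x -> leT g (fst y) (mx x) /\ leT g (snd y) (mx x).
Proof.
  intro h. destruct (mx_ge y) as [h1 h2]. unfold RG in h.
  remember (mx y, y) as u eqn:Hu; remember (mx x, x) as v eqn:Hv.
  destruct h as [a a' c c' r|a c c' r]; inversion Hu; inversion Hv; subst.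
  - split; eapply leT_trans; eauto; left; auto.
  - rewrite <- H2. auto.
Qed.

Definition cT g (m : TT g) := {y : TT g | leT g y m}.

Lemma pred_inj g (x : TT g * TT g) : injects {y | RG g y x} (cT (mx x) * cT (mx x)).
Proof.
  exists (fun (y : {y | RG g y x}) => (exist (fun z => leT g z (mx x)) (fst (proj1_sig y)) (proj1 (RG_bound (proj2_sig y))),
                    exist (fun z => leT g z (mx x)) (snd (proj1_sig y)) (proj2 (RG_bound (proj2_sig y))))).
  intros [[a b] p] [[c d] q] E. simpl in E. inversion E. apply sig_eq; simpl; congruence.
Qed.

Lemma cT_inl g k : injects (cT (inl k : TT g)) nat.
Proof.
  exists (fun y => match proj1_sig y with inl j => j | inr _ => 0 end).
  intros [[a|s] p] [[b|t] q] E; simpl in E.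
  - apply sig_eq; simpl; congruence.
  - exfalso; destruct q as [q|q]; [inversion q | discriminate].
  - exfalso; destruct p as [p|p]; [inversion p | discriminate].
  - exfalso; destruct p as [p|p]; [inversion p | discriminate].
Qed.

Lemma cT_inr g (a : seg ltK g) : injects (cT (inr a : TT g)) (TT (proj1_sig a)).
Proof.
  exists (fun y => match proj1_sig y with
    | inl j => inl (S j)
    | inr s => match excluded_middle_informative (ltK (proj1_sig s) (proj1_sig a)) with
               | left H => inr (exist _ (proj1_sig s) H)
               | right _ => inl 0 end end).
  assert (Hs : forall s, leT g (inr s) (inr a) -> ~ ltK (proj1_sig s) (proj1_sig a) -> s = a).
  { intros s [h|h] n. inversion h; subst. contradiction. congruence. }
  intros [[i|s] p] [[j|t] q] E; simpl in E.
  - apply sig_eq; simpl; congruence.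
  - destruct excluded_middle_informative; discriminate.
  - destruct excluded_middle_informative; discriminate.
  - apply sig_eq; simpl.
    destruct excluded_middle_informative as [h|h];
    destruct excluded_middle_informative as [h'|h']; try discriminate.
    + inversion E. f_equal. apply sig_eq; auto.
    + rewrite (Hs s p h), (Hs t q h'). reflexivity.
Qed.

Lemma TT_incl d g : ltK d g -> injects (TT d) (TT g).
Proof.
  intro h. exists (fun x => match x with
    | inl k => inl k
    | inr s => inr (exist _ (proj1_sig s) (wo_trans WO _ _ _ (proj2_sig s) h)) end).
  intros [a|s] [b|t] E; try discriminate; inversion E; auto.
  f_equal; apply sig_eq; auto.
Qed.

Lemma TT_absorb d g : injects (seg ltK g) (TT d) -> injects (TT g) (TT d).
Proof.
  intros [f Hf].
  exists (fun x => match x with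
    | inl k => inl (to_nat (0, k))
    | inr s => match f s with inl k => inl (to_nat (1, k)) | inr t => inr t end end).
  intros [a|s] [b|t] E.
  - assert (E' : to_nat (0,a) = to_nat (0,b)) by congruence. apply to_nat_inj in E'. inversion E'; auto.
  - exfalso. destruct (f t); [|discriminate].
    assert (E' : to_nat (0,a) = to_nat (1,n)) by congruence. apply to_nat_inj in E'. discriminate.
  - exfalso. destruct (f s); [|discriminate].
    assert (E' : to_nat (1,n) = to_nat (0,b)) by congruence. apply to_nat_inj in E'. discriminate.
  - f_equal; apply Hf.
    destruct (f s) as [n|u], (f t) as [n'|u']; try discriminate.
    + assert (E' : to_nat (1,n) = to_nat (1,n')) by congruence. apply to_nat_inj in E'. congruence.
    + congruence.
Qed.

Lemma TT_nat g : injects nat (TT g).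
Proof. exists inl. intros a b E; inversion E; auto. Qed.

Theorem hessenberg : forall g, injects (TT g * TT g) (TT g).
Proof.
  intro g. induction g as [g IH] using (well_founded_induction (wo_wf WO)).
  destruct (classic (exists d, ltK d g /\ injects (seg ltK g) (TT d))) as [[d [hd Hi]]|HB].
  - eapply inj_comp. apply inj_prod; apply TT_absorb; exact Hi.
    eapply inj_comp. apply IH; exact hd. apply TT_incl; exact hd.
  - destruct (@enum _ _ (RG g) (inl 0 : TT g) (@wf_RG g) (@RG_total g)) as [H|[x Hx]]; auto.
    pose proof (@inj_comp _ _ _ Hx (pred_inj x)) as Hc.
    destruct (mx x) as [k|a] eqn:em.
    + assert (Hn : injects (TT g) nat).
      { eapply inj_comp. exact Hc. eapply inj_comp. apply inj_prod; apply cT_inl. apply inj_natnat. }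
      eapply inj_comp. apply inj_prod; exact Hn. eapply inj_comp. apply inj_natnat. apply TT_nat.
    + exfalso. apply HB. exists (proj1_sig a). split. exact (proj2_sig a).
      apply (@inj_comp _ (TT g)). exists (fun s => inr s : TT g). intros u v E; inversion E; auto.
      eapply inj_comp. exact Hc. eapply inj_comp. apply inj_prod; apply cT_inr.
      apply IH. exact (proj2_sig a).
Qed.

End Hess.

Theorem proposition2p6 :
  forall (L K : Type) (ltK : K -> K -> Prop),
  is_successor_of L ltK ->
  forall p : K -> K -> L,
  exists pbar : K -> K -> L,
    injective_fibers ltK pbar /\
    forall (Theta : Type) (X : Type) (ltX : X -> X -> Prop) (N N' : Type),
      is_initial ltX ->
      (pr1 ltK ltX Theta pbar -> pr1 ltK ltX Theta p) /\
      (pr0 ltK ltX Theta pbar -> pr0 ltK ltX Theta p) /\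
      (pr1_circ ltK ltX Theta N N' pbar -> pr1_circ ltK ltX Theta N N' p) /\
      (pr0_circ ltK ltX Theta N N' pbar -> pr0_circ ltK ltX Theta N N' p).
Proof.
  intros L K ltK [WO [[n Hn] [Hseg HnK]]] p.
  set (l0 := n 0).
  assert (tot : forall x y : K, x <> y -> ltK x y \/ ltK y x).
  { intros x y ne. destruct (wo_total WO x y) as [h|[h|h]]; auto. contradiction. }
  destruct (@enum K L ltK l0 (wo_wf WO) tot) as [Hi|[b0 Hb0]]; [contradiction|].
  assert (Hpi : injects (L * L) L).
  { apply (@inj_comp _ (seg ltK b0 * seg ltK b0)). apply inj_prod; exact Hb0.
    apply (@inj_comp _ (TT ltK b0 * TT ltK b0)).
    apply inj_prod; exists (fun s => inr s : TT ltK b0); intros u v E; inversion E; auto.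
    apply (@inj_comp _ (TT ltK b0)). apply hessenberg; exact WO.
    apply (@inj_comp _ (seg ltK b0)). apply inj_hotel.
    apply (@inj_comp _ L). exists n; exact Hn. exact Hb0.
    apply Hseg. }
  destruct Hpi as [pi Hpi].
  assert (He : forall b, {e : seg ltK b -> L | injective_fun e})
    by (intro b; apply constructive_indefinite_description; apply Hseg).
  set (E := fun b a => match excluded_middle_informative (ltK a b) with
                       | left h => proj1_sig (He b) (exist _ a h)
                       | right _ => l0 end).
  set (f := fun z => match excluded_middle_informative (exists v w, pi (v, w) = z) with
                     | left h => proj1_sig (constructive_indefinite_description _ h)
                     | right _ => l0 end).
  assert (fK : forall v w, f (pi (v, w)) = v).
  { intros v w. unfold f. destruct excluded_middle_informative as [h|h].
    - destruct constructive_indefinite_description as [v' [w' e]]. simpl.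
      apply Hpi in e. inversion e; auto.
    - exfalso; apply h; eauto. }
  exists (fun a b => pi (p a b, E b a)).
  split.
  - intros a a' b h1 h2 Eq. apply Hpi in Eq. injection Eq as Eq0 Eq'.
    unfold E in Eq'.
    destruct (excluded_middle_informative (ltK a b)) as [h|h];
    [|exfalso; apply h; exact (wo_trans WO _ _ _ h1 h2)].
    destruct (excluded_middle_informative (ltK a' b)) as [h'|h']; [|contradiction].
    destruct (He b) as [e He']. simpl in Eq'. apply He' in Eq'.
    inversion Eq'; subst. exact (wo_irrefl WO _ h1).
  - intros Theta X ltX N N' _. split; [|split; [|split]].
    + intros [c Hc]. exists c. intros x0 A HA tau.
      destruct (Hc x0 A HA (fun l => tau (f l))) as [i [j [Hb Heq]]].
      exists i, j. split; auto. intros s t. rewrite Heq. rewrite fK. reflexivity.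
    + intros [c Hc]. exists c. intros x0 A HA tau.
      destruct (Hc x0 A HA (fun s t l => tau s t (f l))) as [i [j [Hb Heq]]].
      exists i, j. split; auto. intros s t. rewrite Heq. rewrite fK. reflexivity.
    + intros [c Hc]. exists c. intros x0 A B HA HB.
      destruct (Hc x0 A B HA HB) as [g [Hg H']]. exists g. split; auto. intro tau.
      destruct (H' (fun l => tau (f l))) as [i [j [Hb Heq]]].
      exists i, j. split; auto. intros s t. rewrite Heq. rewrite fK. reflexivity.
    + intros [c Hc]. exists c. intros x0 A B HA HB.
      destruct (Hc x0 A B HA HB) as [g [Hg H']]. exists g. split; auto. intro tau.
      destruct (H' (fun s t l => tau s t (f l))) as [i [j [Hb Heq]]].
      exists i, j. split; auto. intros s t. rewrite Heq. rewrite fK. reflexivity.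
Qed.
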